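(* Under the standing setup, assume that $f$ is bounded, i.e. $\sup_{q\in\mathcal P}\|f_q\|_\infty<\infty$. Then for all $t\ge0$ and $u_0\in\mathbb R^d$, $\|\mathscr S(t)u_0-u_0\|_\infty\le t\sup_{q\in\mathcal P}\|qu_0+f_q\|_\infty,$ and for all $s,t\ge0$, $\|\mathscr S(t)u_0-\mathscr S(s)u_0\|_\infty\le|t-s|\sup_{q\in\mathcal P}\|qu_0+f_q\|_\infty$. In particular $t\mapsto\mathscr S(t)u_0$ is Lipschitz continuous.
   Context: Standing setup: $d\in\mathbb N$; vectors in $\mathbb R^d$ with $\|u\|_\infty=\max_i|u_i|$; inequalities and suprema of vectors are componentwise; reals are identified with constant vectors. A $Q$-matrix is $q\in\mathbb R^{d\times d}$ with $q_{ii}\le0$, $q_{ij}\ge0$ ($i\ne j$), $\sum_jq_{ij}=0$. Let $\mathcal P$ be a set of $Q$-matrices and $f=(f_q)_{q\in\mathcal P}\subset\mathbb R^d$ with $\sup_{q\in\mathcal P}f_q=f_{q_0}=0$ for some $q_0\in\mathcal P$, such that $\mathcal Qu:=\sup_{q\in\mathcal P}(qu+f_q)$ is finite for every $u\in\mathbb R^d$. For $q\in\mathcal P$, $t\ge0$: $S_q(t)u_0:=e^{tq}u_0+\int_0^te^{sq}f_q\,ds$. For $h\ge0$: $\mathcal E_hu_0:=\sup_{q\in\mathcal P}S_q(h)u_0$. $P$ is the set of finite subsets $\pi\subset[0,\infty)$ with $0\in\pi$; $P_t:=\{\pi\in P:\max\pi=t\}$. For $\pi=\{t_0,\dots,t_m\}$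 with $0=t_0<\dots<t_m$, $m\ge1$, $\mathcal E_\pi:=\mathcal E_{t_1-t_0}\circ\cdots\circ\mathcal E_{t_m-t_{m-1}}$, and $\mathcal E_{\{0\}}:=\mathcal E_0$. The Nisio semigroup of $(\mathcal P,f)$ is $\mathscr S(t)u_0:=\sup_{\pi\in P_t}\mathcal E_\pi u_0$ for $t\ge0$, $u_0\in\mathbb R^d$. *)

(* Defs.v *)
From Stdlib Require Import Reals Lra Lia List Sorted ClassicalEpsilon Factorial.
Open Scope R_scope.

(* Vectors in R^d: functions nat -> R, only indices i < d are meaningful.
   Matrices in R^{d x d}: functions nat -> nat -> R, only i,j < d meaningful. *)
Definition vec := nat -> R.
Definition mat := nat -> nat -> R.

Definition vnorm (d : nat) (u : vec) : R :=
  fold_right Rmax 0 (map (fun i => Rabs (u i)) (seq 0 d)).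

Definition vsub (u v : vec) : vec := fun i => u i - v i.
Definition vadd (u v : vec) : vec := fun i => u i + v i.

Definition fsum (d : nat) (g : nat -> R) : R :=
  fold_right Rplus 0 (map g (seq 0 d)).

Definition mv (d : nat) (q : mat) (u : vec) : vec :=
  fun i => fsum d (fun j => q i j * u j).
Definition mm (d : nat) (a b : mat) : mat :=
  fun i j => fsum d (fun k => a i k * b k j).
Definition mid : mat := fun i j => if Nat.eqb i j then 1 else 0.
Fixpoint mpow (d : nat) (q : mat) (k : nat) : mat :=
  match k with O => mid | S k' => mm d q (mpow d q k') end.

Definition isQmatrix (d : nat) (q : mat) : Prop :=
  (forall i, (i < d)%nat -> q i i <= 0) /\
  (forall i j, (i < d)%nat -> (j < d)%nat -> i <> j -> 0 <= q i j) /\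
  (forall i, (i < d)%nat -> fsum d (fun j => q i j) = 0).

(* limit of a real sequence (arbitrary value if it does not converge) *)
Definition Rlim (u : nat -> R) : R :=
  epsilon (inhabits 0) (fun l => Un_cv u l).

Definition mexp (d : nat) (q : mat) (t : R) : mat :=
  fun i j => Rlim (fun n => sum_f_R0 (fun k => t ^ k / INR (fact k) * mpow d q k i j) n).

(* Riemann integral of g over [a,b] (arbitrary value if not integrable;
   independent of the integrability proof by RiemannInt_P5) *)
Definition Rint (g : R -> R) (a b : R) : R :=
  epsilon (inhabits 0)
    (fun I => exists pr : Riemann_integrable g a b, RiemannInt pr = I).

(* supremum of a set of reals (arbitrary value if no least upper bound) *)
Definition Rsup (E : R -> Prop) : R :=
  epsilon (inhabits 0) (fun l => is_lub E l).

Definition Sq (d : nat) (q : mat) (fq : vec) (t : R) (u0 : vec) : vec :=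
  fun i => mv d (mexp d q t) u0 i + Rint (fun s => mv d (mexp d q s) fq i) 0 t.

Definition Eh (d : nat) (P : mat -> Prop) (f : mat -> vec) (h : R) (u0 : vec) : vec :=
  fun i => Rsup (fun x => exists q, P q /\ x = Sq d q (f q) h u0 i).

(* A partition pi = {t_0 < t_1 < ... < t_m} is represented by the strictly
   increasing list [t_0; ...; t_m]. pi in P_t iff t_0 = 0 and t_m = t. *)
Definition inPt (t : R) (l : list R) : Prop :=
  l <> nil /\ hd 1 l = 0 /\ Sorted Rlt l /\ last l 0 = t.

Fixpoint Ecomp (d : nat) (P : mat -> Prop) (f : mat -> vec) (l : list R) (u0 : vec) : vec :=
  match l with
  | t0 :: ((t1 :: _) as rest) => Eh d P f (t1 - t0) (Ecomp d P f rest u0)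
  | _ => u0
  end.

Definition Epi (d : nat) (P : mat -> Prop) (f : mat -> vec) (l : list R) (u0 : vec) : vec :=
  match l with
  | _ :: nil => Eh d P f 0 u0
  | _ => Ecomp d P f l u0
  end.

Definition Nisio (d : nat) (P : mat -> Prop) (f : mat -> vec) (t : R) (u0 : vec) : vec :=
  fun i => Rsup (fun x => exists l, inPt t l /\ x = Epi d P f l u0 i).

Definition standing_setup (d : nat) (P : mat -> Prop) (f : mat -> vec) : Prop :=
  (forall q, P q -> isQmatrix d q) /\
  (exists q0, P q0 /\ (forall i, (i < d)%nat -> f q0 i = 0) /\
     (forall q i, P q -> (i < d)%nat -> f q i <= 0)) /\
  (forall (u : vec) i, (i < d)%nat ->
     bound (fun x => exists q, P q /\ x = mv d q u i + f q i)).

(* Main.v *)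
Require Import Defs.
From Stdlib Require Import Reals Lra Lia List Sorted ClassicalEpsilon Factorial FunctionalExtensionality.
From Coquelicot Require Import Coquelicot.
Open Scope R_scope.


Lemma fold_plus_acc : forall l a, fold_right Rplus a l = fold_right Rplus 0 l + a.
Proof. induction l; intros; simpl; [lra| rewrite IHl; lra]. Qed.

Lemma fsum_0 g : fsum 0 g = 0. Proof. reflexivity. Qed.
Lemma fsum_S d g : fsum (S d) g = fsum d g + g d.
Proof. unfold fsum. rewrite seq_S, map_app, fold_right_app. simpl.
  rewrite fold_plus_acc. lra. Qed.

Lemma fsum_ext d g h : (forall j, (j < d)%nat -> g j = h j) -> fsum d g = fsum d h.
Proof. induction d; intros H; [reflexivity|]. rewrite !fsum_S. rewrite (H d) by lia. rewrite IHd; [reflexivity|]. intros; apply H; lia. Qed.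

Lemma fsum_plus d g h : fsum d (fun j => g j + h j) = fsum d g + fsum d h.
Proof. induction d; [unfold fsum; simpl; lra|]. rewrite !fsum_S, IHd; lra. Qed.

Lemma fsum_scal d c g : fsum d (fun j => c * g j) = c * fsum d g.
Proof. induction d; [unfold fsum; simpl; lra|]. rewrite !fsum_S, IHd; lra. Qed.

Lemma fsum_scal_r d c g : fsum d (fun j => g j * c) = fsum d g * c.
Proof. induction d; [unfold fsum; simpl; lra|]. rewrite !fsum_S, IHd; lra. Qed.

Lemma fsum_const d c : fsum d (fun _ => c) = INR d * c.
Proof. induction d; [unfold fsum; simpl; lra|]. rewrite fsum_S, IHd, S_INR; lra. Qed.

Lemma fsum_swap d e (g : nat -> nat -> R) :
  fsum d (fun i => fsum e (fun j => g i j)) = fsum e (fun j => fsum d (fun i => g i j)).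
Proof. induction d.
  - rewrite fsum_0. induction e; [reflexivity|]. rewrite fsum_S, <- IHe, !fsum_0. lra.
  - rewrite fsum_S, IHd, <- fsum_plus. apply fsum_ext. intros. rewrite fsum_S. reflexivity. Qed.

Lemma fsum_le d g h : (forall j, (j < d)%nat -> g j <= h j) -> fsum d g <= fsum d h.
Proof. induction d; intros H; [unfold fsum; simpl; lra|]. rewrite !fsum_S.
  assert (g d <= h d) by (apply H; lia). assert (fsum d g <= fsum d h) by (apply IHd; intros; apply H; lia). lra. Qed.

Lemma fsum_abs d g : Rabs (fsum d g) <= fsum d (fun j => Rabs (g j)).
Proof. induction d; [unfold fsum; simpl; rewrite Rabs_R0; lra|]. rewrite !fsum_S.
  eapply Rle_trans; [apply Rabs_triang|]. lra. Qed.

Lemma fsum_mid_l d i x : (i < d)%nat -> fsum d (fun j => mid i j * x j) = x i.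
Proof. induction d; intros H; [lia|]. rewrite fsum_S. unfold mid at 2.
  destruct (Nat.eq_dec i d).
  - subst. rewrite Nat.eqb_refl. rewrite (fsum_ext _ _ (fun _ => 0)).
    + rewrite fsum_const; lra.
    + intros j Hj. unfold mid. destruct (Nat.eqb_spec d j); [lia|lra].
  - rewrite IHd by lia. destruct (Nat.eqb_spec i d); [lia|lra]. Qed.

Lemma fsum_mid_r d i x : (i < d)%nat -> fsum d (fun j => x j * mid j i) = x i.
Proof. intros H. rewrite <- (fsum_mid_l d i x H). apply fsum_ext. intros j _.
  unfold mid. destruct (Nat.eqb_spec j i); destruct (Nat.eqb_spec i j); try lia; subst; lra. Qed.

Lemma fold_max_ge (l : list nat) (g : nat -> R) x : In x l -> g x <= fold_right Rmax 0 (map g l).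
Proof. induction l; simpl; [tauto|]. intros [->|H].
  - apply Rmax_l.
  - eapply Rle_trans; [apply IHl; auto| apply Rmax_r]. Qed.
Lemma fold_max_nonneg (l : list nat) (g : nat -> R) : 0 <= fold_right Rmax 0 (map g l).
Proof. induction l; simpl; [lra|]. eapply Rle_trans; [apply IHl|apply Rmax_r]. Qed.
Lemma fold_max_le (l : list nat) (g : nat -> R) c : 0 <= c -> (forall x, In x l -> g x <= c) -> fold_right Rmax 0 (map g l) <= c.
Proof. induction l; simpl; intros Hc H; [lra|]. apply Rmax_lub; auto. Qed.

Lemma vnorm_ge d u i : (i < d)%nat -> Rabs (u i) <= vnorm d u.
Proof. intros H. unfold vnorm. apply (fold_max_ge _ (fun i => Rabs (u i))). apply in_seq. lia. Qed.
Lemma vnorm_nonneg d u : 0 <= vnorm d u.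
Proof. apply fold_max_nonneg. Qed.
Lemma vnorm_le d u c : 0 <= c -> (forall i, (i < d)%nat -> Rabs (u i) <= c) -> vnorm d u <= c.
Proof. intros Hc H. apply fold_max_le; auto. intros x Hx. apply in_seq in Hx. apply H; lia. Qed.
Lemma vnorm_le' d u c : (exists i, (i < d)%nat) -> (forall i, (i < d)%nat -> Rabs (u i) <= c) -> vnorm d u <= c.
Proof. intros [i Hi] H. apply vnorm_le; auto. eapply Rle_trans; [apply Rabs_pos|apply (H i Hi)]. Qed.

Lemma vnorm_sub_sym d u v : vnorm d (vsub u v) = vnorm d (vsub v u).
Proof. unfold vnorm, vsub. f_equal. apply map_ext. intros. rewrite Rabs_minus_sym. auto. Qed.

Lemma mpow_S d q k i j : mpow d q (S k) i j = fsum d (fun l => q i l * mpow d q k l j).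
Proof. reflexivity. Qed.

Lemma mpow_S_r d q k : forall i j, (i < d)%nat -> (j < d)%nat ->
  mpow d q (S k) i j = fsum d (fun l => mpow d q k i l * q l j).
Proof. induction k; intros i j Hi Hj.
  - rewrite mpow_S. simpl. rewrite fsum_mid_r by auto. rewrite fsum_mid_l by auto. reflexivity.
  - rewrite mpow_S.
    rewrite (fsum_ext _ _ (fun l => q i l * fsum d (fun m => mpow d q k l m * q m j))).
    2:{ intros l Hl. rewrite IHk; auto. }
    rewrite (fsum_ext _ (fun l => mpow d q (S k) i l * q l j) (fun l => fsum d (fun m => q i m * mpow d q k m l) * q l j)).
    2:{ intros. reflexivity. }
    rewrite (fsum_ext _ (fun l => q i l * fsum d (fun m => mpow d q k l m * q m j))
       (fun l => fsum d (fun m => q i l * mpow d q k l m * q m j))).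
    2:{ intros. rewrite <- fsum_scal. apply fsum_ext. intros. ring. }
    rewrite fsum_swap. apply fsum_ext. intros m _. rewrite <- fsum_scal_r. reflexivity.
Qed.

Lemma mpow_bound d q K : 0 <= K -> (forall a b, (a < d)%nat -> (b < d)%nat -> Rabs (q a b) <= K) ->
  forall k i j, (i < d)%nat -> (j < d)%nat -> Rabs (mpow d q k i j) <= (INR d * K) ^ k.
Proof. intros HK Hq. induction k; intros i j Hi Hj.
  - simpl. unfold mid. destruct (Nat.eqb i j); rewrite ?Rabs_R1, ?Rabs_R0; lra.
  - rewrite mpow_S. eapply Rle_trans; [apply fsum_abs|].
    eapply Rle_trans; [apply (fsum_le _ _ (fun _ => K * (INR d * K) ^ k))|].
    + intros l Hl. rewrite Rabs_mult. apply Rmult_le_compat; auto using Rabs_pos.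
    + rewrite fsum_const. simpl. lra.
Qed.

Lemma mpow_rowsum d q : isQmatrix d q -> forall k i, (i < d)%nat ->
  fsum d (fun j => mpow d q k i j) = match k with O => 1 | S _ => 0 end.
Proof. intros [_ [_ Hs]]. induction k; intros i Hi.
  - simpl. rewrite <- (fsum_mid_l d i (fun _ => 1) Hi). apply fsum_ext; intros; ring.
  - rewrite (fsum_ext _ _ (fun j => fsum d (fun l => q i l * mpow d q k l j))) by reflexivity.
    rewrite <- fsum_swap.
    rewrite (fsum_ext _ _ (fun l => q i l * match k with O => 1 | S _ => 0 end)).
    + rewrite fsum_scal_r, Hs by auto. ring.
    + intros l Hl. rewrite fsum_scal, IHk; auto.
Qed.

Definition Kq d (q : mat) : R := fsum d (fun a => fsum d (fun b => Rabs (q a b))).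
Lemma Kq_nonneg d q : 0 <= Kq d q.
Proof. unfold Kq. rewrite <- (Rmult_0_r (INR d)), <- fsum_const. apply fsum_le. intros.
  rewrite <- (Rmult_0_r (INR d)), <- fsum_const. apply fsum_le. intros. apply Rabs_pos. Qed.

Lemma fsum_ge_term d g j : (j < d)%nat -> (forall l, (l < d)%nat -> 0 <= g l) -> g j <= fsum d g.
Proof. induction d; intros Hj H; [lia|]. rewrite fsum_S.
  destruct (Nat.eq_dec j d).
  - subst. assert (0 <= fsum d g). { rewrite <- (Rmult_0_r (INR d)), <- fsum_const. apply fsum_le. intros; apply H; lia. } lra.
  - assert (g j <= fsum d g) by (apply IHd; [lia| intros; apply H; lia]). assert (0 <= g d) by (apply H; lia). lra.
Qed.

Lemma Kq_bound d q a b : (a < d)%nat -> (b < d)%nat -> Rabs (q a b) <= Kq d q.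
Proof. intros Ha Hb. unfold Kq. eapply Rle_trans; [|apply (fsum_ge_term _ _ a Ha)].
  - apply (fsum_ge_term _ (fun b => Rabs (q a b))); auto. intros; apply Rabs_pos.
  - intros. rewrite <- (Rmult_0_r (INR d)), <- fsum_const. apply fsum_le. intros; apply Rabs_pos.
Qed.

Lemma scal_pow (a : nat -> R) (x : R) k : @scal R_AbsRing R_NormedModule (pow_n x k) (a k) = a k * x ^ k.
Proof. change (scal (pow_n x k) (a k)) with (pow_n x k * a k). rewrite pow_n_pow. apply Rmult_comm. Qed.

Lemma is_pseries_Uncv a x l : is_pseries a x l <-> Un_cv (fun n => sum_f_R0 (fun k => a k * x ^ k) n) l.
Proof. split; intros H.
  - apply (is_pseries_ext _ _ _ _ (fun n => eq_refl)) in H.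
    unfold is_pseries in H.
    apply (is_series_ext _ (fun k => a k * x ^ k)) in H.
    + apply is_series_Reals in H. exact H.
    + intros n. apply scal_pow.
  - unfold is_pseries. apply (is_series_ext (fun k => a k * x ^ k)).
    + intros n. symmetry. apply (scal_pow a).
    + apply is_series_Reals. exact H.
Qed.

Lemma term_le_sum (f : nat -> R) n : (forall k, 0 <= f k) -> f n <= sum_f_R0 f n.
Proof. intros H. destruct n; simpl; [lra|]. pose proof (cond_pos_sum f n H). lra. Qed.

Lemma CV_inf a N : 0 <= N -> (forall n, Rabs (a n) <= N ^ n / INR (fact n)) -> CV_radius a = p_infty.
Proof. intros HN Ha. destruct (CV_radius_bounded a) as [Hub _].
  assert (HE : forall r, exists M, forall n, Rabs (a n * r ^ n) <= M).
  { intros r. exists (exp (N * Rabs r)). intros n.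
    eapply Rle_trans; [|apply (exp_ge_taylor (N * Rabs r) n)].
    2:{ apply Rmult_le_pos; auto using Rabs_pos. }
    eapply Rle_trans; [|apply (term_le_sum (fun k => (N * Rabs r) ^ k / INR (fact k)))].
    - rewrite Rabs_mult, <- RPow_abs, Rpow_mult_distr. unfold Rdiv.
      rewrite (Rmult_comm (N ^ n)), Rmult_assoc. rewrite (Rmult_comm (Rabs r ^ n)).
      apply Rmult_le_compat_r; [apply pow_le, Rabs_pos|]. apply (Ha n).
    - intros k. apply Rmult_le_pos; [apply pow_le; apply Rmult_le_pos; auto using Rabs_pos|].
      left; apply Rinv_0_lt_compat, INR_fact_lt_0. }
  destruct (CV_radius a) as [c| |] eqn:E; auto.
  - exfalso. specialize (Hub (c + 1) (HE (c+1))). simpl in Hub. lra.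
  - exfalso. specialize (Hub 0 (HE 0)). simpl in Hub. exact Hub.
Qed.

Lemma PS_Uncv a x : CV_radius a = p_infty -> Un_cv (fun n => sum_f_R0 (fun k => a k * x ^ k) n) (PSeries a x).
Proof. intros H. apply is_pseries_Uncv. apply PSeries_correct. apply CV_radius_inside. rewrite H. exact I. Qed.

Lemma PS_ex a x : CV_radius a = p_infty -> ex_pseries a x.
Proof. intros H. apply CV_radius_inside. rewrite H. exact I. Qed.

Lemma Rlim_eq u l : Un_cv u l -> Rlim u = l.
Proof. intros H. unfold Rlim. assert (Hs := epsilon_spec (inhabits 0) (fun l => Un_cv u l) (ex_intro _ l H)).
  simpl in Hs. eapply UL_sequence; eauto. Qed.

Lemma psum_fsum d (w : nat -> R) (g : nat -> nat -> R) x :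
  (forall l, (l < d)%nat -> CV_radius (g l) = p_infty) ->
  is_pseries (fun n => fsum d (fun l => w l * g l n)) x (fsum d (fun l => w l * PSeries (g l) x)).
Proof. induction d; intros H.
  - apply is_pseries_Uncv. rewrite fsum_0.
    intros eps Heps. exists O. intros n _. rewrite (sum_eq _ (fun _ => 0)).
    + rewrite sum_cte. unfold Rdist. rewrite Rmult_0_l, Rminus_0_r, Rabs_R0. lra.
    + intros. rewrite fsum_0. ring.
  - apply is_pseries_Uncv. rewrite fsum_S.
    apply (Un_cv_ext (fun n => sum_f_R0 (fun k => fsum d (fun l => w l * g l k) * x ^ k) n + sum_f_R0 (fun k => (w d * g d k) * x ^ k) n)).
    { intros n. rewrite <- sum_plus. apply sum_eq. intros. rewrite fsum_S. ring. }
    apply CV_plus.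
    + apply is_pseries_Uncv. apply IHd. intros; apply H; lia.
    + apply (Un_cv_ext (fun n => w d * sum_f_R0 (fun k => g d k * x ^ k) n)).
      { intros n. rewrite scal_sum. apply sum_eq. intros; ring. }
      apply CV_mult; [intros eps He; exists O; intros; unfold Rdist; rewrite Rminus_diag, Rabs_R0; lra|].
      apply PS_Uncv. apply H. lia.
Qed.

Definition coef d (q : mat) i j (k : nat) : R := mpow d q k i j / INR (fact k).
Definition Em d q (t : R) i j : R := PSeries (coef d q i j) t.

Lemma coef_rad d q i j : (i < d)%nat -> (j < d)%nat -> CV_radius (coef d q i j) = p_infty.
Proof. intros Hi Hj. apply (CV_inf _ (INR d * Kq d q)).
  - apply Rmult_le_pos; [apply pos_INR|apply Kq_nonneg].
  - intros n. unfold coef. unfold Rdiv. rewrite Rabs_mult, Rabs_inv, (Rabs_pos_eq (INR (fact n))) by (left; apply INR_fact_lt_0).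
    apply Rmult_le_compat_r; [left; apply Rinv_0_lt_compat, INR_fact_lt_0|].
    apply mpow_bound; auto using Kq_nonneg, Kq_bound.
Qed.

Lemma mexp_Em d q t i j : (i < d)%nat -> (j < d)%nat -> mexp d q t i j = Em d q t i j.
Proof. intros Hi Hj. unfold mexp, Em. apply Rlim_eq.
  replace (fun n => sum_f_R0 (fun k => t ^ k / INR (fact k) * mpow d q k i j) n)
    with (fun n => sum_f_R0 (fun k => coef d q i j k * t ^ k) n).
  - apply PS_Uncv, coef_rad; auto.
  - apply functional_extensionality. intros n. apply sum_eq. intros k _. unfold coef. field. apply INR_fact_neq_0.
Qed.

Lemma Em_0 d q i j : Em d q 0 i j = mid i j.
Proof. unfold Em. rewrite PSeries_0. unfold coef. simpl. field. Qed.

Lemma PS_derive_coef d q i j : (i < d)%nat -> (j < d)%nat -> forall n,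
  PS_derive (coef d q i j) n = fsum d (fun l => q l j * coef d q i l n).
Proof. intros Hi Hj n. unfold PS_derive, coef. rewrite mpow_S_r by auto.
  rewrite fact_simpl, mult_INR.
  transitivity (/ INR (fact n) * fsum d (fun l => mpow d q n i l * q l j)).
  - field. split; [apply INR_fact_neq_0| apply not_0_INR; lia].
  - rewrite <- fsum_scal. apply fsum_ext. intros. field. apply INR_fact_neq_0.
Qed.

Lemma Em_deriv d q t i j : (i < d)%nat -> (j < d)%nat ->
  is_derive (fun s => Em d q s i j) t (fsum d (fun l => q l j * Em d q t i l)).
Proof. intros Hi Hj. unfold Em.
  replace (fsum d (fun l => q l j * PSeries (coef d q i l) t)) with (PSeries (PS_derive (coef d q i j)) t).
  - apply is_derive_PSeries. rewrite coef_rad by auto. exact I.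
  - apply is_pseries_unique. eapply is_pseries_ext.
    2:{ apply psum_fsum. intros; apply coef_rad; auto. }
    intros n. simpl. rewrite PS_derive_coef; auto.
Qed.

Lemma Em_rowsum d q t i : isQmatrix d q -> (i < d)%nat -> fsum d (fun j => Em d q t i j) = 1.
Proof. intros HQ Hi.
  assert (H1 := psum_fsum d (fun _ => 1) (coef d q i) t (fun j Hj => coef_rad d q i j Hi Hj)).
  assert (H2 : is_pseries (fun n => fsum d (fun j => 1 * coef d q i j n)) t 1).
  { apply is_pseries_Uncv. apply (Un_cv_ext (fun _ => 1)).
    - intros n.
      assert (Hc : forall k, fsum d (fun j => 1 * coef d q i j k) = match k with O => 1 | S _ => 0 end).
      { intros k. rewrite (fsum_ext _ _ (fun j => / INR (fact k) * mpow d q k i j)).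
        - rewrite fsum_scal. change (fsum d (mpow d q k i)) with (fsum d (fun j => mpow d q k i j)). rewrite (mpow_rowsum d q HQ k i Hi). destruct k; [simpl; field | rewrite Rmult_0_r; reflexivity].
        - intros. unfold coef. field. apply INR_fact_neq_0. }
      rewrite (sum_eq _ (fun k => match k with O => 1 | S _ => 0 end)).
      + clear. induction n; simpl; [reflexivity|]. rewrite <- IHn. ring.
      + intros k _. rewrite Hc. destruct k; simpl; ring.
    - intros eps He. exists O. intros. unfold Rdist. rewrite Rminus_diag, Rabs_R0. lra. }
  apply is_pseries_unique in H1. apply is_pseries_unique in H2.
  rewrite H2 in H1. rewrite H1. unfold Em. apply fsum_ext; intros; ring.
Qed.

Definition ea (c : R) (k : nat) : R := c ^ k / INR (fact k).
Definition gam (c : R) (n : nat) (s : nat -> R) : R :=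
  sum_f_R0 (fun k => ea c k * (s (n - k)%nat / INR (fact (n - k)))) n.

Lemma gam_rec c n s : INR (S n) * gam c (S n) s = gam c n (fun k => s (S k)) + c * gam c n s.
Proof. unfold gam. rewrite scal_sum.
  rewrite (sum_eq _ (fun k => INR k * ea c k * (s (S n - k)%nat / INR (fact (S n - k)))
                          + INR (S n - k) * ea c k * (s (S n - k)%nat / INR (fact (S n - k))))).
  2:{ intros k Hk. rewrite minus_INR by lia. ring. }
  rewrite sum_plus. rewrite Rplus_comm. f_equal.
  - rewrite tech5. rewrite Nat.sub_diag. rewrite INR_0. rewrite !Rmult_0_l, Rplus_0_r.
    apply sum_eq. intros k Hk. rewrite Nat.sub_succ_l by lia.
    rewrite fact_simpl, mult_INR. field. split; [apply INR_fact_neq_0| apply not_0_INR; lia].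
  - rewrite decomp_sum by lia. simpl pred. simpl INR at 1. rewrite !Rmult_0_l, Rplus_0_l.
    rewrite scal_sum. apply sum_eq. intros k Hk. unfold ea. simpl (S n - S k)%nat.
    rewrite fact_simpl, mult_INR. simpl pow. field. repeat split; first [apply INR_fact_neq_0 | apply not_0_INR; lia].
Qed.

Lemma sum_fsum_swap d (g : nat -> nat -> R) n :
  sum_f_R0 (fun k => fsum d (g k)) n = fsum d (fun l => sum_f_R0 (fun k => g k l) n).
Proof. induction n; simpl; [reflexivity|]. rewrite IHn, <- fsum_plus. reflexivity. Qed.

Lemma gam_fsum c n d (w : nat -> R) (t : nat -> nat -> R) :
  gam c n (fun k => fsum d (fun l => w l * t l k)) = fsum d (fun l => w l * gam c n (t l)).
Proof. unfold gam.
  rewrite (sum_eq _ (fun k => fsum d (fun l => w l * (ea c k * (t l (n - k)%nat / INR (fact (n - k))))))).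
  - rewrite sum_fsum_swap. apply fsum_ext. intros l _. rewrite scal_sum. apply sum_eq. intros; ring.
  - intros k _. unfold Rdiv. rewrite <- fsum_scal_r, <- fsum_scal. apply fsum_ext. intros; ring.
Qed.

Lemma gam_nonneg d q c : isQmatrix d q -> Kq d q <= c -> forall n i j, (i < d)%nat -> (j < d)%nat ->
  0 <= gam c n (fun k => mpow d q k i j).
Proof. intros HQ Hc n. induction n; intros i j Hi Hj.
  - unfold gam, ea. simpl. unfold mid. destruct (Nat.eqb i j); lra.
  - assert (H : 0 <= INR (S n) * gam c (S n) (fun k => mpow d q k i j)).
    { rewrite gam_rec.
      change (fun k => mpow d q (S k) i j) with (fun k => fsum d (fun l => q i l * mpow d q k l j)).
      rewrite gam_fsum.
      rewrite <- (fsum_mid_l d i (fun l => gam c n (fun k => mpow d q k l j)) Hi).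
      rewrite <- fsum_scal, <- fsum_plus.
      rewrite <- (Rmult_0_r (INR d)), <- fsum_const. apply fsum_le. intros l Hl.
      rewrite <- Rmult_assoc, <- Rmult_plus_distr_r. apply Rmult_le_pos; [|apply IHn; auto].
      destruct HQ as [Hd [Ho _]]. unfold mid. destruct (Nat.eqb_spec i l).
      - subst. assert (Rabs (q l l) <= Kq d q) by (apply Kq_bound; auto).
        apply Rabs_le_between in H. lra.
      - assert (0 <= q i l) by (apply Ho; auto). assert (0 <= Kq d q) by apply Kq_nonneg. lra. }
    assert (0 < INR (S n)) by (apply lt_0_INR; lia). nra.
Qed.

Lemma PSeries_ge a x N : 0 <= x -> ex_pseries a x -> (forall n, 0 <= a n) ->
  sum_f_R0 (fun k => a k * x ^ k) N <= PSeries a x.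
Proof. intros Hx He Ha. apply growing_ineq.
  - intros n. rewrite tech5. assert (0 <= a (S n) * x ^ S n) by (apply Rmult_le_pos; auto; apply pow_le; auto). lra.
  - apply is_pseries_Uncv. apply PSeries_correct. auto.
Qed.

Lemma Em_nonneg d q t i j : isQmatrix d q -> 0 <= t -> (i < d)%nat -> (j < d)%nat -> 0 <= Em d q t i j.
Proof. intros HQ Ht Hi Hj. set (c := Kq d q).
  assert (Hc : 0 <= c) by apply Kq_nonneg.
  assert (Hra : CV_radius (ea c) = p_infty).
  { apply (CV_inf _ c Hc). intros n. unfold ea. rewrite Rabs_pos_eq; [lra|].
    apply Rmult_le_pos; [apply pow_le; auto| left; apply Rinv_0_lt_compat, INR_fact_lt_0]. }
  assert (Hrb := coef_rad d q i j Hi Hj).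
  assert (Hm := PSeries_mult (ea c) (coef d q i j) t ltac:(rewrite Hra; exact I) ltac:(rewrite Hrb; exact I)).
  assert (H1 : 0 <= PSeries (PS_mult (ea c) (coef d q i j)) t).
  { eapply Rle_trans; [|apply (PSeries_ge _ _ O Ht)].
    - simpl. apply Rmult_le_pos; [|lra]. apply (gam_nonneg d q c HQ (Rle_refl _) 0 i j Hi Hj).
    - apply ex_pseries_mult; [rewrite Hra|rewrite Hrb]; exact I.
    - intros n. apply (gam_nonneg d q c HQ (Rle_refl _) n i j Hi Hj). }
  assert (H2 : 1 <= PSeries (ea c) t).
  { eapply Rle_trans; [|apply (PSeries_ge _ _ O Ht)].
    - unfold ea. simpl. lra.
    - apply PS_ex; auto.
    - intros n. unfold ea. apply Rmult_le_pos; [apply pow_le; auto| left; apply Rinv_0_lt_compat, INR_fact_lt_0]. }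
  unfold Em. rewrite Hm in H1. nra.
Qed.

Lemma fsum_derive d (F F' : nat -> R -> R) t :
  (forall j, (j < d)%nat -> is_derive (F j) t (F' j t)) ->
  is_derive (fun s => fsum d (fun j => F j s)) t (fsum d (fun j => F' j t)).
Proof. induction d; intros H.
  - apply (is_derive_ext (fun _ => 0)); [intros; reflexivity|]. rewrite fsum_0. apply (is_derive_const 0).
  - apply (is_derive_ext (fun s => plus (fsum d (fun j => F j s)) (F d s))).
    + intros. rewrite fsum_S. reflexivity.
    + rewrite fsum_S. apply (is_derive_plus (fun s => fsum d (fun j => F j s)) (F d)).
      * apply IHd. intros; apply H; lia.
      * apply H; lia.
Qed.

Lemma derive_mul_const (F : R -> R) t l c : is_derive F t l -> is_derive (fun s => F s * c) t (l * c).
Proof. intros H. apply (is_derive_scal_l F t l c H). Qed.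

Lemma Rint_RInt g a b : ex_RInt g a b -> Rint g a b = RInt g a b.
Proof. intros H. unfold Rint.
  assert (Hs := epsilon_spec (inhabits 0) (fun I => exists pr : Riemann_integrable g a b, RiemannInt pr = I)
     (ex_intro _ (RiemannInt (ex_RInt_Reals_0 _ _ _ H)) (ex_intro _ (ex_RInt_Reals_0 _ _ _ H) eq_refl))).
  destruct Hs as [pr Hpr]. rewrite <- Hpr. symmetry. apply RInt_Reals.
Qed.

Section Sq.
Variables (d : nat) (q : mat) (fq : vec).
Hypothesis HQ : isQmatrix d q.

Definition gq i (s : R) : R := fsum d (fun j => Em d q s i j * fq j).
Definition w2 (u0 : vec) i (t : R) : R := fsum d (fun j => Em d q t i j * u0 j) + RInt (gq i) 0 t.

Lemma Emv_derive (v : vec) i t : (i < d)%nat ->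
  is_derive (fun s => fsum d (fun j => Em d q s i j * v j)) t
     (fsum d (fun l => Em d q t i l * mv d q v l)).
Proof. intros Hi.
  replace (fsum d (fun l => Em d q t i l * mv d q v l))
    with (fsum d (fun j => fsum d (fun l => q l j * Em d q t i l) * v j)).
  - apply (fsum_derive d (fun j s => Em d q s i j * v j) (fun j t => fsum d (fun l => q l j * Em d q t i l) * v j)).
    intros j Hj. apply derive_mul_const. apply Em_deriv; auto.
  - unfold mv. rewrite (fsum_ext _ _ (fun j => fsum d (fun l => q l j * Em d q t i l * v j)))
      by (intros; rewrite <- fsum_scal_r; reflexivity).
    rewrite fsum_swap. apply fsum_ext. intros l _. rewrite <- fsum_scal. apply fsum_ext. intros; ring.
Qed.

Lemma gq_cont i t : (i < d)%nat -> continuous (gq i) t.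
Proof. intros Hi. apply (@ex_derive_continuous R_AbsRing R_NormedModule (gq i)). eexists. apply Emv_derive; auto. Qed.

Lemma gq_exRInt i a b : (i < d)%nat -> ex_RInt (gq i) a b.
Proof. intros Hi. apply (@ex_RInt_continuous R_CompleteNormedModule). intros; apply gq_cont; auto. Qed.

Lemma w2_derive u0 i t : (i < d)%nat ->
  is_derive (w2 u0 i) t (fsum d (fun l => Em d q t i l * (mv d q u0 l + fq l))).
Proof. intros Hi.
  replace (fsum d (fun l => Em d q t i l * (mv d q u0 l + fq l)))
    with (plus (fsum d (fun l => Em d q t i l * mv d q u0 l)) (gq i t)).
  - apply (is_derive_plus (fun s => fsum d (fun j => Em d q s i j * u0 j)) (fun s => RInt (gq i) 0 s)).
    + apply Emv_derive; auto.
    + apply (is_derive_RInt (gq i) (fun s => RInt (gq i) 0 s) 0 t).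
      * apply filter_forall. intros x. apply (@RInt_correct R_CompleteNormedModule). apply gq_exRInt; auto.
      * apply gq_cont; auto.
  - unfold gq. change (plus ?a ?b) with (a + b). rewrite <- fsum_plus. apply fsum_ext. intros; ring.
Qed.

Lemma Em_contr t i (v : vec) : 0 <= t -> (i < d)%nat -> Rabs (fsum d (fun l => Em d q t i l * v l)) <= vnorm d v.
Proof. intros Ht Hi. eapply Rle_trans; [apply fsum_abs|].
  eapply Rle_trans; [apply (fsum_le _ _ (fun l => Em d q t i l * vnorm d v))|].
  - intros l Hl. rewrite Rabs_mult, (Rabs_pos_eq (Em d q t i l)) by (apply Em_nonneg; auto).
    apply Rmult_le_compat_l; [apply Em_nonneg; auto| apply vnorm_ge; auto].
  - rewrite fsum_scal_r, Em_rowsum; auto. lra.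
Qed.

Lemma w2_time u0 i a b : (i < d)%nat -> 0 <= a -> 0 <= b ->
  Rabs (w2 u0 i a - w2 u0 i b) <= Rabs (a - b) * vnorm d (vadd (mv d q u0) fq).
Proof. intros Hi Ha Hb.
  destruct (MVT_gen (w2 u0 i) b a (fun t => fsum d (fun l => Em d q t i l * (mv d q u0 l + fq l)))) as [c [Hc Heq]].
  - intros; apply w2_derive; auto.
  - intros x _. apply continuity_pt_filterlim. apply (@ex_derive_continuous R_AbsRing R_NormedModule (w2 u0 i)). eexists. apply w2_derive; auto.
  - rewrite Heq, Rabs_mult, Rmult_comm. apply Rmult_le_compat_l; [apply Rabs_pos|].
    apply (Em_contr c i (vadd (mv d q u0) fq)); auto.
    assert (0 <= Rmin b a) by (apply Rmin_glb; auto). lra.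
Qed.

Lemma Sq_w2 u0 i t : (i < d)%nat -> Sq d q fq t u0 i = w2 u0 i t.
Proof. intros Hi. unfold Sq, w2. f_equal.
  - unfold mv. apply fsum_ext. intros. rewrite mexp_Em; auto.
  - replace (fun s => mv d (mexp d q s) fq i) with (gq i).
    + apply Rint_RInt, gq_exRInt; auto.
    + apply functional_extensionality. intros s. unfold gq, mv. apply fsum_ext. intros. rewrite mexp_Em; auto.
Qed.

Lemma Sq_time u0 i a b : (i < d)%nat -> 0 <= a -> 0 <= b ->
  Rabs (Sq d q fq a u0 i - Sq d q fq b u0 i) <= Rabs (a - b) * vnorm d (vadd (mv d q u0) fq).
Proof. intros. rewrite !Sq_w2; auto. apply w2_time; auto. Qed.

Lemma Sq_zero u0 i : (i < d)%nat -> Sq d q fq 0 u0 i = u0 i.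
Proof. intros Hi. rewrite Sq_w2 by auto. unfold w2. rewrite RInt_point.
  rewrite (fsum_ext _ _ (fun j => mid i j * u0 j)) by (intros; rewrite Em_0; reflexivity).
  rewrite fsum_mid_l by auto. change zero with 0. ring.
Qed.

Lemma Sq_space u v i t : (i < d)%nat -> 0 <= t ->
  Rabs (Sq d q fq t u i - Sq d q fq t v i) <= vnorm d (vsub u v).
Proof. intros Hi Ht. unfold Sq.
  replace (mv d (mexp d q t) u i + Rint (fun s => mv d (mexp d q s) fq i) 0 t -
      (mv d (mexp d q t) v i + Rint (fun s => mv d (mexp d q s) fq i) 0 t))
    with (fsum d (fun l => Em d q t i l * vsub u v l)).
  - apply Em_contr; auto.
  - unfold mv, vsub. rewrite (fsum_ext _ (fun l => Em d q t i l * (u l - v l))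
       (fun l => mexp d q t i l * u l + (- (mexp d q t i l * v l)))).
    + rewrite fsum_plus. rewrite <- (Rmult_1_l (fsum d (fun j => mexp d q t i j * v j))).
      rewrite <- (Rmult_1_l (fsum d (fun l => - (mexp d q t i l * v l)))).
      replace (fsum d (fun l => - (mexp d q t i l * v l))) with (-1 * fsum d (fun j => mexp d q t i j * v j)).
      * ring.
      * rewrite <- fsum_scal. apply fsum_ext. intros; ring.
    + intros. rewrite mexp_Em; auto. ring.
Qed.
End Sq.

Lemma Rsup_spec (E : R -> Prop) : (exists x, E x) -> (exists B, forall x, E x -> x <= B) -> is_lub E (Rsup E).
Proof. intros Hn [B HB]. unfold Rsup.
  destruct (completeness E (ex_intro _ B HB) Hn) as [m Hm].
  exact (epsilon_spec (inhabits 0) (fun l => is_lub E l) (ex_intro _ m Hm)).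
Qed.

Lemma lub_le (E F : R -> Prop) a b c : is_lub E a -> is_lub F b ->
  (forall x, E x -> exists y, F y /\ x <= y + c) -> a <= b + c.
Proof. intros [_ Ha] [Hb _] H. apply Ha. intros x Hx. destruct (H x Hx) as [y [Hy Hxy]].
  specialize (Hb y Hy). lra. Qed.

Lemma vnorm_ext d u v : (forall i, (i < d)%nat -> u i = v i) -> vnorm d u = vnorm d v.
Proof. intros H. unfold vnorm. f_equal. apply map_ext_in. intros i Hi. apply in_seq in Hi. rewrite H; auto; lia. Qed.

Lemma vnorm_triang d u v w : vnorm d (vsub u w) <= vnorm d (vsub u v) + vnorm d (vsub v w).
Proof. apply vnorm_le.
  - pose proof (vnorm_nonneg d (vsub u v)); pose proof (vnorm_nonneg d (vsub v w)); lra.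
  - intros i Hi. unfold vsub at 1. replace (u i - w i) with (vsub u v i + vsub v w i) by (unfold vsub; ring).
    eapply Rle_trans; [apply Rabs_triang|]. pose proof (vnorm_ge d (vsub u v) i Hi); pose proof (vnorm_ge d (vsub v w) i Hi); lra.
Qed.

Lemma vnorm_self d u : vnorm d (vsub u u) = 0.
Proof. apply Rle_antisym; [|apply vnorm_nonneg]. apply vnorm_le; [lra|]. intros. unfold vsub. rewrite Rminus_diag, Rabs_R0; lra. Qed.

Section Main.
Variables (d : nat) (P : mat -> Prop) (f : mat -> vec) (M : R) (u0 : vec) (L : R) (q0 : mat).
Hypothesis HPQ : forall q, P q -> isQmatrix d q.
Hypothesis Hq0 : P q0.
Hypothesis HM : forall q, P q -> vnorm d (f q) <= M.
Hypothesis HL : forall q, P q -> vnorm d (vadd (mv d q u0) (f q)) <= L.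

Lemma L_nonneg : 0 <= L.
Proof. eapply Rle_trans; [apply vnorm_nonneg| apply (HL q0 Hq0)]. Qed.

Definition Sset h (u : vec) i := fun x => exists q, P q /\ x = Sq d q (f q) h u i.

Lemma Eh_lub h u i : 0 <= h -> (i < d)%nat -> is_lub (Sset h u i) (Eh d P f h u i).
Proof. intros Hh Hi. apply Rsup_spec.
  - exists (Sq d q0 (f q0) h u i). exists q0. auto.
  - exists (vnorm d u + h * M). intros x [q [Hq ->]].
    pose proof (Sq_space d q (f q) (HPQ q Hq) u (fun _ => 0) i h Hi Hh) as H1.
    pose proof (Sq_time d q (f q) (HPQ q Hq) (fun _ => 0) i h 0 Hi Hh (Rle_refl 0)) as H2.
    rewrite (Sq_zero d q (f q) (fun _ => 0) i Hi) in H2.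
    rewrite (vnorm_ext d (vsub u (fun _ => 0)) u) in H1 by (intros; unfold vsub; ring).
    rewrite (vnorm_ext d (vadd (mv d q (fun _ => 0)) (f q)) (f q)) in H2.
    2:{ intros j Hj. unfold vadd, mv. rewrite (fsum_ext _ _ (fun _ => 0)) by (intros; ring). rewrite fsum_const. ring. }
    rewrite !Rminus_0_r in H2. rewrite (Rabs_pos_eq h Hh) in H2.
    pose proof (HM q Hq). apply Rabs_le_between in H1. apply Rabs_le_between in H2.
    assert (h * vnorm d (f q) <= h * M) by (apply Rmult_le_compat_l; auto). lra.
Qed.

Lemma Eh_lip h u v i : 0 <= h -> (i < d)%nat -> Rabs (Eh d P f h u i - Eh d P f h v i) <= vnorm d (vsub u v).
Proof. intros Hh Hi. apply Rabs_le_between. split.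
  - cut (Eh d P f h v i <= Eh d P f h u i + vnorm d (vsub u v)); [lra|].
    apply (lub_le _ _ _ _ _ (Eh_lub h v i Hh Hi) (Eh_lub h u i Hh Hi)).
    intros x [q [Hq ->]]. exists (Sq d q (f q) h u i). split; [exists q; auto|].
    pose proof (Sq_space d q (f q) (HPQ q Hq) v u i h Hi Hh). rewrite vnorm_sub_sym in H.
    apply Rabs_le_between in H. lra.
  - cut (Eh d P f h u i <= Eh d P f h v i + vnorm d (vsub u v)); [lra|].
    apply (lub_le _ _ _ _ _ (Eh_lub h u i Hh Hi) (Eh_lub h v i Hh Hi)).
    intros x [q [Hq ->]]. exists (Sq d q (f q) h v i). split; [exists q; auto|].
    pose proof (Sq_space d q (f q) (HPQ q Hq) u v i h Hi Hh).
    apply Rabs_le_between in H. lra.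
Qed.

Lemma Eh_time a b i : 0 <= a -> 0 <= b -> (i < d)%nat -> Rabs (Eh d P f a u0 i - Eh d P f b u0 i) <= Rabs (a - b) * L.
Proof. intros Ha Hb Hi.
  assert (Hq : forall q, P q -> Rabs (Sq d q (f q) a u0 i - Sq d q (f q) b u0 i) <= Rabs (a - b) * L).
  { intros q Hq. eapply Rle_trans; [apply Sq_time; auto|]. apply Rmult_le_compat_l; [apply Rabs_pos|auto]. }
  apply Rabs_le_between. split.
  - cut (Eh d P f b u0 i <= Eh d P f a u0 i + Rabs (a - b) * L); [lra|].
    apply (lub_le _ _ _ _ _ (Eh_lub b u0 i Hb Hi) (Eh_lub a u0 i Ha Hi)).
    intros x [q [Hq' ->]]. exists (Sq d q (f q) a u0 i). split; [exists q; auto|].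
    specialize (Hq q Hq'). apply Rabs_le_between in Hq. lra.
  - cut (Eh d P f a u0 i <= Eh d P f b u0 i + Rabs (a - b) * L); [lra|].
    apply (lub_le _ _ _ _ _ (Eh_lub a u0 i Ha Hi) (Eh_lub b u0 i Hb Hi)).
    intros x [q [Hq' ->]]. exists (Sq d q (f q) b u0 i). split; [exists q; auto|].
    specialize (Hq q Hq'). apply Rabs_le_between in Hq. lra.
Qed.

Lemma Eh_zero u i : (i < d)%nat -> Eh d P f 0 u i = u i.
Proof. intros Hi. destruct (Eh_lub 0 u i (Rle_refl 0) Hi) as [Hub Hl]. apply Rle_antisym.
  - apply Hl. intros x [q [Hq ->]]. rewrite Sq_zero; auto. lra.
  - apply Hub. exists q0. split; auto. rewrite Sq_zero; auto.
Qed.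

Lemma Eh_lipv h u v : 0 <= h -> vnorm d (vsub (Eh d P f h u) (Eh d P f h v)) <= vnorm d (vsub u v).
Proof. intros Hh. apply vnorm_le; [apply vnorm_nonneg|]. intros i Hi. apply Eh_lip; auto. Qed.

Lemma Eh_timev a b : 0 <= a -> 0 <= b -> vnorm d (vsub (Eh d P f a u0) (Eh d P f b u0)) <= Rabs (a - b) * L.
Proof. intros Ha Hb. apply vnorm_le; [apply Rmult_le_pos; [apply Rabs_pos|apply L_nonneg]|].
  intros i Hi. apply Eh_time; auto. Qed.

Lemma Eh_stepv h : 0 <= h -> vnorm d (vsub (Eh d P f h u0) u0) <= h * L.
Proof. intros Hh. rewrite (vnorm_ext d _ (vsub (Eh d P f h u0) (Eh d P f 0 u0))).
  - eapply Rle_trans; [apply Eh_timev; lra|]. rewrite Rminus_0_r, Rabs_pos_eq by auto. lra.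
  - intros i Hi. unfold vsub. rewrite Eh_zero; auto.
Qed.

Lemma Ecomp_lip l u v : Sorted Rlt l -> vnorm d (vsub (Ecomp d P f l u) (Ecomp d P f l v)) <= vnorm d (vsub u v).
Proof. induction l as [|a l IH]; intros Hs; [simpl; lra|].
  destruct l as [|b r]; [simpl; lra|].
  apply Sorted_inv in Hs as [Hs Hh]. apply HdRel_inv in Hh.
  change (Ecomp d P f (a :: b :: r) u) with (Eh d P f (b - a) (Ecomp d P f (b :: r) u)).
  change (Ecomp d P f (a :: b :: r) v) with (Eh d P f (b - a) (Ecomp d P f (b :: r) v)).
  eapply Rle_trans; [apply Eh_lipv; lra|]. apply IH; auto.
Qed.

Lemma part1_list l a : Sorted Rlt (a :: l) -> vnorm d (vsub (Ecomp d P f (a :: l) u0) u0) <= (last (a :: l) 0 - a) * L.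
Proof. revert a. induction l as [|b r IH]; intros a Hs.
  - simpl. rewrite vnorm_self. lra.
  - apply Sorted_inv in Hs as [Hs Hh]. apply HdRel_inv in Hh.
    change (Ecomp d P f (a :: b :: r) u0) with (Eh d P f (b - a) (Ecomp d P f (b :: r) u0)).
    change (last (a :: b :: r) 0) with (last (b :: r) 0).
    eapply Rle_trans; [apply (vnorm_triang _ _ (Eh d P f (b - a) u0))|].
    pose proof (Eh_lipv (b - a) (Ecomp d P f (b :: r) u0) u0 ltac:(lra)).
    pose proof (IH b Hs). pose proof (Eh_stepv (b - a) ltac:(lra)). lra.
Qed.

Lemma cut_list l a s : Sorted Rlt (a :: l) -> a <= s <= last (a :: l) 0 ->
  exists l', Sorted Rlt (a :: l') /\ last (a :: l') 0 = s /\
    vnorm d (vsub (Ecomp d P f (a :: l) u0) (Ecomp d P f (a :: l') u0)) <= (last (a :: l) 0 - s) * L.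
Proof. revert a. induction l as [|b r IH]; intros a Hs Has.
  - simpl in Has. assert (s = a) by lra. subst s. exists nil. split; auto. split; [reflexivity|]. rewrite vnorm_self. simpl. replace (a - a) with 0 by ring. lra.
  - pose proof Hs as Hs0. apply Sorted_inv in Hs as [Hs Hh]. apply HdRel_inv in Hh.
    change (last (a :: b :: r) 0) with (last (b :: r) 0) in *.
    destruct (Rle_lt_dec b s) as [Hbs|Hsb].
    + destruct (IH b Hs ltac:(lra)) as [l'' [Hs'' [Hl'' Hn'']]].
      exists (b :: l''). split; [|split].
      * apply Sorted_cons; [exact Hs'' | apply HdRel_cons; exact Hh].
      * simpl last. exact Hl''.
      * change (Ecomp d P f (a :: b :: r) u0) with (Eh d P f (b - a) (Ecomp d P f (b :: r) u0)).
        change (Ecomp d P f (a :: b :: l'') u0) with (Eh d P f (b - a) (Ecomp d P f (b :: l'') u0)).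
        eapply Rle_trans; [apply Eh_lipv; lra|]. auto.
    + destruct (Req_dec s a) as [->|Hsa].
      * exists nil. split; [constructor; auto|]. split; [reflexivity|].
        change (Ecomp d P f (a :: nil) u0) with u0.
        pose proof (part1_list (b :: r) a Hs0). simpl last in H |- *. exact H.
      * exists (s :: nil). split; [|split; [reflexivity|]].
        { constructor; constructor; auto; lra. }
        change (Ecomp d P f (a :: b :: r) u0) with (Eh d P f (b - a) (Ecomp d P f (b :: r) u0)).
        change (Ecomp d P f (a :: s :: nil) u0) with (Eh d P f (s - a) (Ecomp d P f (s :: nil) u0)).
        change (Ecomp d P f (s :: nil) u0) with u0.
        eapply Rle_trans; [apply (vnorm_triang _ _ (Eh d P f (b - a) u0))|].
        pose proof (Eh_lipv (b - a) (Ecomp d P f (b :: r) u0) u0 ltac:(lra)).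
        pose proof (part1_list r b Hs).
        pose proof (Eh_timev (b - a) (s - a) ltac:(lra) ltac:(lra)).
        rewrite Rabs_pos_eq in H1 by lra. lra.
Qed.

Lemma Ecomp_app l a t : Ecomp d P f ((a :: l) ++ t :: nil) u0 = Ecomp d P f (a :: l) (Eh d P f (t - last (a :: l) 0) u0).
Proof. revert a. induction l as [|b r IH]; intros a.
  - reflexivity.
  - change ((a :: b :: r) ++ t :: nil) with (a :: b :: (r ++ t :: nil)).
    change (Ecomp d P f (a :: b :: r ++ t :: nil) u0) with (Eh d P f (b - a) (Ecomp d P f ((b :: r) ++ t :: nil) u0)).
    rewrite IH. reflexivity.
Qed.

Lemma Sorted_app l a t : Sorted Rlt (a :: l) -> last (a :: l) 0 < t -> Sorted Rlt ((a :: l) ++ t :: nil).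
Proof. revert a. induction l as [|b r IH]; intros a Hs Ht.
  - simpl in *. constructor; constructor; auto.
  - apply Sorted_inv in Hs as [Hs Hh]. apply HdRel_inv in Hh.
    change ((a :: b :: r) ++ t :: nil) with (a :: ((b :: r) ++ t :: nil)).
    constructor; [apply IH; auto|]. simpl. constructor. auto.
Qed.

Lemma Epi_Ecomp l i : (i < d)%nat -> Epi d P f l u0 i = Ecomp d P f l u0 i.
Proof. intros Hi. destruct l as [|a [|b r]]; try reflexivity. simpl. apply Eh_zero; auto. Qed.

Definition Nset t i := fun x => exists l, inPt t l /\ x = Epi d P f l u0 i.

Lemma Nset_bound t i x : (i < d)%nat -> Nset t i x -> Rabs (x - u0 i) <= t * L.
Proof. intros Hi [l [[Hn [Hh [Hs Hl]]] ->]]. destruct l as [|a r]; [congruence|]. simpl in Hh. subst a.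
  rewrite Epi_Ecomp by auto. pose proof (part1_list r 0 Hs). rewrite Hl in H.
  rewrite Rminus_0_r in H. eapply Rle_trans; [|apply H].
  apply (vnorm_ge d (vsub (Ecomp d P f (0 :: r) u0) u0) i Hi).
Qed.

Lemma Nset_ne t i : 0 <= t -> exists x, Nset t i x.
Proof. intros Ht. destruct (Req_dec t 0) as [->|Ht0].
  - exists (Epi d P f (0 :: nil) u0 i). exists (0 :: nil). split; auto. split; [congruence|]. split; [reflexivity|]. split; [constructor; auto|reflexivity].
  - exists (Epi d P f (0 :: t :: nil) u0 i). exists (0 :: t :: nil). split; auto. split; [congruence|]. split; [reflexivity|]. split; [|reflexivity].
    constructor; constructor; auto; lra.
Qed.

Lemma Nisio_lub t i : 0 <= t -> (i < d)%nat -> is_lub (Nset t i) (Nisio d P f t u0 i).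
Proof. intros Ht Hi. apply Rsup_spec; [apply Nset_ne; auto|]. exists (u0 i + t * L). intros x Hx.
  apply Nset_bound in Hx; auto. apply Rabs_le_between in Hx. lra. Qed.

Lemma Nisio_part1 t i : 0 <= t -> (i < d)%nat -> Rabs (Nisio d P f t u0 i - u0 i) <= t * L.
Proof. intros Ht Hi. destruct (Nisio_lub t i Ht Hi) as [Hub Hl]. apply Rabs_le_between. split.
  - destruct (Nset_ne t i Ht) as [x Hx]. pose proof (Hub x Hx). pose proof (Nset_bound t i x Hi Hx).
    apply Rabs_le_between in H0. lra.
  - cut (Nisio d P f t u0 i <= u0 i + t * L); [lra|]. apply Hl. intros x Hx. apply Nset_bound in Hx; auto.
    apply Rabs_le_between in Hx. lra.
Qed.

Lemma Nisio_part2 s t i : 0 <= s -> s <= t -> (i < d)%nat -> Rabs (Nisio d P f t u0 i - Nisio d P f s u0 i) <= (t - s) * L.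
Proof. intros Hs Hst Hi. apply Rabs_le_between. split.
  - cut (Nisio d P f s u0 i <= Nisio d P f t u0 i + (t - s) * L); [lra|].
    apply (lub_le _ _ _ _ _ (Nisio_lub s i Hs Hi) (Nisio_lub t i ltac:(lra) Hi)).
    intros x [l [[Hn [Hh [Hso Hl]]] ->]]. destruct l as [|a r]; [congruence|]. simpl in Hh. subst a.
    destruct (Req_dec s t) as [<-|Hne].
    + exists (Epi d P f (0 :: r) u0 i). split; [exists (0 :: r); split; auto; repeat split; auto|]. lra.
    + exists (Epi d P f ((0 :: r) ++ t :: nil) u0 i). split.
      * exists ((0 :: r) ++ t :: nil). split; auto. split; [destruct r; simpl; congruence|].
        split; [reflexivity|]. split; [apply Sorted_app; auto; lra| apply last_last].
      * rewrite !Epi_Ecomp by auto. rewrite Ecomp_app, Hl.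
        pose proof (Ecomp_lip (0 :: r) u0 (Eh d P f (t - s) u0) Hso).
        pose proof (vnorm_ge d (vsub (Ecomp d P f (0 :: r) u0) (Ecomp d P f (0 :: r) (Eh d P f (t - s) u0))) i Hi).
        pose proof (Eh_stepv (t - s) ltac:(lra)). rewrite vnorm_sub_sym in H1.
        unfold vsub at 1 in H0. apply Rabs_le_between in H0. lra.
  - cut (Nisio d P f t u0 i <= Nisio d P f s u0 i + (t - s) * L); [lra|].
    apply (lub_le _ _ _ _ _ (Nisio_lub t i ltac:(lra) Hi) (Nisio_lub s i Hs Hi)).
    intros x [l [[Hn [Hh [Hso Hl]]] ->]]. destruct l as [|a r]; [congruence|]. simpl in Hh. subst a.
    destruct (cut_list r 0 s Hso ltac:(rewrite Hl; lra)) as [l' [Hs' [Hl' Hn']]].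
    exists (Epi d P f (0 :: l') u0 i). split.
    + exists (0 :: l'). split; auto. split; [congruence|]. split; [reflexivity|]. split; auto.
    + rewrite !Epi_Ecomp by auto. rewrite Hl in Hn'.
      pose proof (vnorm_ge d (vsub (Ecomp d P f (0 :: r) u0) (Ecomp d P f (0 :: l') u0)) i Hi).
      unfold vsub at 1 in H. apply Rabs_le_between in H. lra.
Qed.
End Main.

Theorem mainTheorem4 (d : nat) (P : mat -> Prop) (f : mat -> vec) :
  standing_setup d P f ->
  (exists M, forall q, P q -> vnorm d (f q) <= M) ->
  forall (u0 : vec) (L : R),
    (forall q, P q -> vnorm d (vadd (mv d q u0) (f q)) <= L) ->
    (forall t, 0 <= t ->
       vnorm d (vsub (Nisio d P f t u0) u0) <= t * L) /\
    (forall s t, 0 <= s -> 0 <= t ->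
       vnorm d (vsub (Nisio d P f t u0) (Nisio d P f s u0)) <= Rabs (t - s) * L).
Proof.
  intros [HPQ [[q0 [Hq0 _]] _]] [M HM] u0 L HL.
  assert (HL0 : 0 <= L) by exact (L_nonneg d P f u0 L q0 Hq0 HL).
  split.
  - intros t Ht. apply vnorm_le; [apply Rmult_le_pos; auto|]. intros i Hi.
    apply (Nisio_part1 d P f M u0 L q0 HPQ Hq0 HM HL); auto.
  - intros s t Hs Ht. apply vnorm_le; [apply Rmult_le_pos; [apply Rabs_pos|auto]|]. intros i Hi.
    unfold vsub. destruct (Rle_dec s t) as [Hst|Hts].
    + rewrite (Rabs_pos_eq (t - s)) by lra. apply (Nisio_part2 d P f M u0 L q0 HPQ Hq0 HM HL); auto.
    + rewrite (Rabs_minus_sym t s), (Rabs_pos_eq (s - t)) by lra. rewrite Rabs_minus_sym.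
      apply (Nisio_part2 d P f M u0 L q0 HPQ Hq0 HM HL); auto; lra.
Qed.
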